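(* Let $q=p^r$ be odd and $n\ge 1$. Let: - $g\in\mathbb{F}_q[x_1,\dots,x_n]$ be a polynomial of total degree $n(q-1)/2$; - $f\in\mathbb{F}_q[y]$ be a permutation polynomial of degree $q-2$; - $a\in\mathbb{F}_q$ be a non-square. Then $$h(x_1,\dots,x_n,y)=\bigl(g(x_1,\dots,x_n)^2-a\bigr)f(y)$$ is a permutation polynomial in $\mathbb{F}_q[x_1,\dots,x_n,y]$.
   Context: $\mathbb{F}_q$ is the finite field with $q=p^r$ elements. A polynomial in $m$ variables over $\mathbb{F}_q$ is a permutation polynomial (PP) if, for every $c\in\mathbb{F}_q$, the equation $h=c$ has exactly $q^{m-1}$ solutions in $\mathbb{F}_q^m$. A univariate PP is a polynomial inducing a bijection of $\mathbb{F}_q$. *)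

(* Defs.v *)
From HB Require Import structures.
From mathcomp Require Import all_boot all_order all_algebra all_field.
From mathcomp Require Import mpoly.
Set Implicit Arguments. Unset Strict Implicit. Unset Printing Implicit Defensive.
Import GRing.Theory.
Local Open Scope ring_scope.

(* total degree of a multivariate polynomial (msize p = 1 + total degree, 0 for p = 0) *)
Definition mtotdeg (R : nzRingType) (n : nat) (p : {mpoly R[n]}) : nat := (msize p).-1.

Definition perm_poly (F : finFieldType) (f : {poly F}) : Prop :=
  bijective (fun x : F => f.[x]).

Definition perm_mpoly (F : finFieldType) (m : nat) (h : {mpoly F[m]}) : Prop :=
  forall c : F, #|[set v : {ffun 'I_m -> F} | meval (fun i => v i) h == c]| = (#|F| ^ (m - 1))%N.

Definition nonsquare (F : finFieldType) (a : F) : bool := ~~ [exists b : F, b ^+ 2 == a].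

(* the polynomial h(x_1..x_n,y) = (g(x)^2 - a) f(y) in F[x_1,..,x_n,y];
   variables x_i are 'X_i for i < n and y is 'X_n *)
Definition hpoly (F : finFieldType) (n : nat) (g : {mpoly F[n]}) (f : {poly F}) (a : F)
  : {mpoly F[n.+1]} :=
  let glift := g \mPo [tuple 'X_(widen_ord (leqnSn n) i) | i < n] in
  let fy := (map_poly (@mpolyC n.+1 F) f).['X_(@ord_max n)] in
  (glift ^+ 2 - a%:MP) * fy.

(* Main.v *)
Require Import Defs.
From HB Require Import structures.
From mathcomp Require Import all_boot all_order all_algebra all_field.
From mathcomp Require Import mpoly.
Local Open Scope ring_scope.
Import GRing.Theory.

Lemma eval_h (F : finFieldType) (n : nat) (g : {mpoly F[n]}) (f : {poly F}) (a : F)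
  (v : 'I_n.+1 -> F) :
  meval v (hpoly g f a) =
  ((meval (fun j => v (widen_ord (leqnSn n) j)) g) ^+ 2 - a) * f.[v ord_max].
Proof.
rewrite /hpoly mevalM mevalB mevalC rmorphXn /= comp_mpoly_meval.
congr (_ * _).
  congr (_ ^+ 2 - _); apply: meval_eq => j; by rewrite tnth_mktuple mevalXU.
rewrite -horner_map /= mevalXU -map_poly_comp.
by rewrite (eq_map_poly (fun c => mevalC v c)) map_poly_id.
Qed.

Theorem mainTheorem6 (F : finFieldType) (n : nat) (g : {mpoly F[n]}) (f : {poly F}) (a : F) :
  odd #|F| -> (1 <= n)%N ->
  mtotdeg g = (n * (#|F| - 1))./2 ->
  perm_poly f -> size f = (#|F| - 2).+1 ->
  nonsquare a ->
  perm_mpoly (hpoly g f a).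
Proof.
move=> _ _ _ [fi fK fiK] _ nsq c.
set u := fun x : {ffun 'I_n -> F} => (meval (fun i => x i) g) ^+ 2 - a.
have u0 x : u x != 0.
  rewrite /u subr_eq0; apply/negP => /eqP E.
  by move/negP: nsq; apply; apply/existsP; exists (meval (fun i => x i) g); rewrite E.
pose ext (x : {ffun 'I_n -> F}) : {ffun 'I_n.+1 -> F} :=
  [ffun i => if unlift ord_max i is Some j then x j else fi (c / u x)].
have extW x j : ext x (widen_ord (leqnSn n) j) = x j.
  have -> : widen_ord (leqnSn n) j = lift ord_max j by apply: val_inj => /=; rewrite /bump leqNgt ltn_ord.
  by rewrite /ext ffunE liftK.
have extM x : ext x ord_max = fi (c / u x) by rewrite /ext ffunE unlift_none.
have ext_inj : injective ext.
  move=> x y E; apply/ffunP => j; by rewrite -extW E extW.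
have -> : [set v : {ffun 'I_n.+1 -> F} | meval (fun i => v i) (hpoly g f a) == c]
          = ext @: setT.
  apply/setP => v; rewrite inE eval_h; apply/eqP/imsetP.
    move=> Hv; exists [ffun j => v (widen_ord (leqnSn n) j)] => //.
    apply/ffunP => i; case: (unliftP ord_max i) => [j ->|->].
      have -> : lift ord_max j = widen_ord (leqnSn n) j by apply: val_inj => /=; rewrite /bump leqNgt ltn_ord.
      by rewrite extW ffunE.
    rewrite extM; set x := [ffun _ => _].
    have Hu : u x = (meval (fun j => v (widen_ord (leqnSn n) j)) g) ^+ 2 - a.
      by rewrite /u; congr (_ ^+ 2 - _); apply: meval_eq => j; rewrite ffunE.
    rewrite -[v ord_max]fK; congr fi.
    by rewrite -Hv Hu mulrAC divff ?mul1r // -Hu.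
  case=> x _ ->.
  have Hu : (meval (fun j => ext x (widen_ord (leqnSn n) j)) g) ^+ 2 - a = u x.
    by rewrite /u; congr (_ ^+ 2 - _); apply: meval_eq => j; rewrite extW.
  by rewrite Hu extM fiK mulrC divfK.
rewrite card_imset // cardsT card_ffun card_ord.
by rewrite subSS subn0.
Qed.
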